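(* Let $a<b$ be integers, $\sigma=(\sigma_x)_{x\in[a,b]\cap\mathbb{Z}}$ arbitrary strictly positive deterministic numbers, and $X^{a,b}$ the inhomogeneous CTRW on $[a,b]\cap\mathbb{Z}$ in the trapping landscape $\sigma$. For each $x\in[a,b)\cap\mathbb{Z}$, $z\in[x,b)\cap\mathbb{Z}$ and $t>0$, \[ P^{a,b}_x(\tau_b\le t)\le \frac{t}{2(b-z)\sigma_z}. \] Moreover, for each $x\in(a,b)\cap\mathbb{Z}$ and $t>0$, \[ P^{a,b}_x(\tau\le t)\le\frac{t}{\min\{x-a,b-x\}\,\sigma_x}. \]
   Context: For integers $a<b$ and positive numbers $(\sigma_x)_{x\in[a,b]\cap\mathbb{Z}}$, the inhomogeneous CTRW $X^{a,b}$ on $[a,b]\cap\mathbb{Z}$ in the trapping landscape $\sigma$ is the continuous-time Markov chain on $[a,b]\cap\mathbb{Z}$ which jumps from $x$ to each nearest neighbour $y$ of $x$ within $[a,b]\cap\mathbb{Z}$ at rate $1/(2\sigma_x)$ (reflecting at $a$ and $b$). $P^{a,b}_x$ is its law started from $x$. $\tau_a:=\inf\{s:X^{a,b}_s=a\}$, $\tau_b:=\inf\{s:X^{a,b}_s=b\}$, $\tau:=\min\{\tau_a,\tau_b\}$. *)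

(* Defs.v *)
From Stdlib Require Import Reals ZArith.
Open Scope R_scope.

Definition sumZ (a b : Z) (f : Z -> R) : R :=
  if Z.ltb b a then 0
  else sum_f_R0 (fun k => f (a + Z.of_nat k)%Z) (Z.to_nat (b - a)).

Definition inI (a b x : Z) : bool := (Z.leb a x && Z.leb x b)%bool.

(* Generator of the inhomogeneous CTRW on [a,b] ∩ Z in the trapping
   landscape sigma (rate 1/(2 sigma_x) to each nearest neighbour inside
   [a,b]), with the states of the set [absorb] made absorbing
   (i.e. the chain stopped upon hitting [absorb]). *)
Definition gen (a b : Z) (sigma : Z -> R) (absorb : Z -> bool) (x y : Z) : R :=
  if absorb x then 0
  else if (inI a b y && (Z.abs (x - y) =? 1)%Z)%bool then / (2 * sigma x)
  else if Z.eqb x y then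
    - ((if inI a b (x - 1) then 1 else 0) + (if inI a b (x + 1) then 1 else 0))
      / (2 * sigma x)
  else 0.

Fixpoint genpow (a b : Z) (sigma : Z -> R) (absorb : Z -> bool) (n : nat)
  (x y : Z) : R :=
  match n with
  | O => if Z.eqb x y then 1 else 0
  | S m => sumZ a b (fun z => gen a b sigma absorb x z * genpow a b sigma absorb m z y)
  end.

(* [hit_prob a b sigma A t x l] : l is P^{a,b}_x(tau_A <= t), where tau_A is
   the hitting time of the set A; it is the probability that the chain
   stopped at A is in A at time t, i.e. the sum over y in A of the
   (x,y) entry of the transition matrix exp(t Q_A) = sum_n t^n Q_A^n / n!. *)
Definition hit_prob (a b : Z) (sigma : Z -> R) (absorb : Z -> bool) (t : R)
  (x : Z) (l : R) : Prop :=
  infinite_sum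
    (fun n => t ^ n / INR (fact n) *
       sumZ a b (fun y => if absorb y then genpow a b sigma absorb n x y else 0))
    l.

(* tau_b and tau = min(tau_a, tau_b). *)
Definition at_b (b : Z) : Z -> bool := fun y => Z.eqb y b.
Definition at_ab (a b : Z) : Z -> bool := fun y => (Z.eqb y a || Z.eqb y b)%bool.

(* Main.v *)
Require Import Defs.
From Stdlib Require Import Reals ZArith Lia Lra.
From Coquelicot Require Import Coquelicot.
Open Scope R_scope.

Lemma sum_swap_nat (F : nat -> nat -> R) (m n : nat) :
  sum_f_R0 (fun i => sum_f_R0 (fun j => F i j) m) n =
  sum_f_R0 (fun j => sum_f_R0 (fun i => F i j) n) m.
Proof.
  induction n as [|n IH]; simpl.
  - reflexivity.
  - rewrite IH, <- plus_sum. reflexivity.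
Qed.

Lemma sum_scal_l (f : nat -> R) (c : R) n :
  sum_f_R0 (fun k => c * f k) n = c * sum_f_R0 f n.
Proof. induction n; simpl; [ring| rewrite IHn; ring]. Qed.

Lemma sum_delta_nat (k0 : nat) (v : R) N :
  sum_f_R0 (fun k => if Nat.eqb k k0 then v else 0) N =
  if Nat.leb k0 N then v else 0.
Proof.
  induction N as [|N IH].
  - destruct k0; simpl; reflexivity.
  - rewrite tech5, IH.
    destruct (Nat.leb_spec k0 N); destruct (Nat.eqb_spec (S N) k0);
      destruct (Nat.leb_spec k0 (S N)); try lia; lra.
Qed.

Lemma sumZ_unfold a b f : (a <= b)%Z ->
  sumZ a b f = sum_f_R0 (fun k => f (a + Z.of_nat k)%Z) (Z.to_nat (b - a)).
Proof. intros H; unfold sumZ; destruct (Z.ltb_spec b a); [lia|reflexivity]. Qed.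

Lemma sumZ_ext a b f g : (a <= b)%Z ->
  (forall z, (a <= z <= b)%Z -> f z = g z) -> sumZ a b f = sumZ a b g.
Proof.
  intros H E; rewrite !sumZ_unfold by lia; apply sum_eq; intros k Hk; apply E; lia.
Qed.

Lemma sumZ_plus a b f g : (a <= b)%Z ->
  sumZ a b (fun z => f z + g z) = sumZ a b f + sumZ a b g.
Proof. intros H; rewrite !sumZ_unfold by lia; apply plus_sum. Qed.

Lemma sumZ_scal a b f c : (a <= b)%Z ->
  sumZ a b (fun z => c * f z) = c * sumZ a b f.
Proof. intros H; rewrite !sumZ_unfold by lia; apply sum_scal_l. Qed.

Lemma sumZ_le a b f g : (a <= b)%Z ->
  (forall z, (a <= z <= b)%Z -> f z <= g z) -> sumZ a b f <= sumZ a b g.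
Proof.
  intros H E; rewrite !sumZ_unfold by lia; apply sum_Rle; intros k Hk; apply E; lia.
Qed.

Lemma sumZ_swap a b (F : Z -> Z -> R) : (a <= b)%Z ->
  sumZ a b (fun y => sumZ a b (fun z => F y z)) =
  sumZ a b (fun z => sumZ a b (fun y => F y z)).
Proof.
  intros H; rewrite !sumZ_unfold by lia.
  rewrite (sum_eq _ (fun i => sum_f_R0 (fun j => F (a + Z.of_nat i)%Z (a + Z.of_nat j)%Z) (Z.to_nat (b - a)))).
  2:{ intros; rewrite sumZ_unfold by lia; reflexivity. }
  rewrite sum_swap_nat. apply sum_eq; intros; rewrite sumZ_unfold by lia; reflexivity.
Qed.

Lemma sumZ_delta a b w h : (a <= b)%Z ->
  sumZ a b (fun z => if Z.eqb z w then h z else 0) =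
  if inI a b w then h w else 0.
Proof.
  intros H; rewrite sumZ_unfold by lia.
  unfold inI; destruct (Z.leb_spec a w); destruct (Z.leb_spec w b); simpl.
  - rewrite (sum_eq _ (fun k => if Nat.eqb k (Z.to_nat (w - a)) then h w else 0)).
    + rewrite sum_delta_nat. destruct (Nat.leb_spec (Z.to_nat (w - a)) (Z.to_nat (b - a))); [reflexivity|lia].
    + intros k Hk. destruct (Z.eqb_spec (a + Z.of_nat k) w); destruct (Nat.eqb_spec k (Z.to_nat (w - a))); try lia.
      * subst; reflexivity.
      * reflexivity.
  - all: rewrite (sum_eq _ (fun k => if Nat.eqb k (S (Z.to_nat (b - a))) then h w else 0));
    [ rewrite sum_delta_nat; destruct (Nat.leb_spec (S (Z.to_nat (b - a))) (Z.to_nat (b - a))); [lia|reflexivity]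
    | intros k Hk; destruct (Z.eqb_spec (a + Z.of_nat k) w); destruct (Nat.eqb_spec k (S (Z.to_nat (b - a)))); try lia; reflexivity ].
Qed.

Lemma inI_true a b y : inI a b y = true <-> (a <= y <= b)%Z.
Proof. unfold inI; destruct (Z.leb_spec a y); destruct (Z.leb_spec y b); simpl; split; intros; try lia; congruence. Qed.

Definition Qop a b sigma absorb (f : Z -> R) (y : Z) : R :=
  sumZ a b (fun z => gen a b sigma absorb y z * f z).
Definition Bop a b sigma absorb (lam : R) (f : Z -> R) (y : Z) : R :=
  Qop a b sigma absorb f y + lam * f y.
Fixpoint opow (Op : (Z -> R) -> Z -> R) (n : nat) (f : Z -> R) : Z -> R :=
  match n with O => f | S m => Op (opow Op m f) end.

Definition extop a b (Op : (Z -> R) -> Z -> R) := forall f g,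
  (forall z, (a <= z <= b)%Z -> f z = g z) -> forall y, (a <= y <= b)%Z -> Op f y = Op g y.
Definition linop a b (Op : (Z -> R) -> Z -> R) := forall f g c1 c2 y, (a <= y <= b)%Z ->
  Op (fun z => c1 * f z + c2 * g z) y = c1 * Op f y + c2 * Op g y.
Definition posop a b (Op : (Z -> R) -> Z -> R) := forall h,
  (forall z, (a <= z <= b)%Z -> 0 <= h z) -> forall y, (a <= y <= b)%Z -> 0 <= Op h y.

Lemma opow_ext a b Op : extop a b Op -> forall n f g,
  (forall z, (a <= z <= b)%Z -> f z = g z) -> forall y, (a <= y <= b)%Z -> opow Op n f y = opow Op n g y.
Proof.
  intros He n; induction n as [|n IH]; intros f g E y Hy; simpl; [auto|].
  apply He; auto.
Qed.

Lemma opow_comm a b Op : extop a b Op -> forall n f y, (a <= y <= b)%Z ->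
  opow Op n (Op f) y = Op (opow Op n f) y.
Proof.
  intros He n; induction n as [|n IH]; intros f y Hy; simpl; [reflexivity|].
  apply He; auto.
Qed.

Lemma opow_lin a b Op : extop a b Op -> linop a b Op -> forall n f g c1 c2 y, (a <= y <= b)%Z ->
  opow Op n (fun z => c1 * f z + c2 * g z) y = c1 * opow Op n f y + c2 * opow Op n g y.
Proof.
  intros He Hl n; induction n as [|n IH]; intros f g c1 c2 y Hy; simpl; [reflexivity|].
  rewrite <- Hl by auto. apply He; auto.
Qed.

Lemma op_mono a b Op : extop a b Op -> linop a b Op -> posop a b Op -> forall f g,
  (forall z, (a <= z <= b)%Z -> f z <= g z) -> forall y, (a <= y <= b)%Z -> Op f y <= Op g y.
Proof.
  intros He Hl Hp f g E y Hy.
  assert (0 <= Op (fun z => 1 * g z + (-1) * f z) y).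
  { apply Hp; auto. intros z Hz; specialize (E z Hz); lra. }
  rewrite Hl in H by auto. lra.
Qed.

Lemma opow_mono a b Op : extop a b Op -> linop a b Op -> posop a b Op -> forall n f g,
  (forall z, (a <= z <= b)%Z -> f z <= g z) -> forall y, (a <= y <= b)%Z -> opow Op n f y <= opow Op n g y.
Proof.
  intros He Hl Hp n; induction n as [|n IH]; intros f g E y Hy; simpl; [auto|].
  apply (op_mono a b); auto.
Qed.

Lemma Qop_ext a b sigma absorb : (a <= b)%Z -> extop a b (Qop a b sigma absorb).
Proof. intros H f g E y Hy; unfold Qop; apply sumZ_ext; auto; intros; rewrite E; auto. Qed.

Lemma Qop_lin a b sigma absorb : (a <= b)%Z -> linop a b (Qop a b sigma absorb).
Proof.
  intros H f g c1 c2 y Hy; unfold Qop.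
  rewrite <- !sumZ_scal, <- sumZ_plus by auto. apply sumZ_ext; auto; intros; ring.
Qed.

Lemma Bop_ext a b sigma absorb lam : (a <= b)%Z -> extop a b (Bop a b sigma absorb lam).
Proof. intros H f g E y Hy; unfold Bop; rewrite (Qop_ext a b sigma absorb H f g E y Hy), E; auto. Qed.

Lemma Bop_lin a b sigma absorb lam : (a <= b)%Z -> linop a b (Bop a b sigma absorb lam).
Proof. intros H f g c1 c2 y Hy; unfold Bop; rewrite Qop_lin by auto; ring. Qed.

Lemma Qop_eq a b sigma absorb f y : (a <= b)%Z -> (a <= y <= b)%Z ->
  Qop a b sigma absorb f y =
  if absorb y then 0 else
   ((if inI a b (y - 1) then f (y - 1)%Z - f y else 0) +
    (if inI a b (y + 1) then f (y + 1)%Z - f y else 0)) / (2 * sigma y).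
Proof.
  intros H Hy; unfold Qop.
  destruct (absorb y) eqn:Ea.
  - rewrite (sumZ_ext _ _ _ (fun z => 0 * f z)) by (auto; intros; unfold gen; rewrite Ea; ring).
    rewrite sumZ_scal by auto; ring.
  - set (L := if inI a b (y - 1) then 1 else 0).
    set (Rr := if inI a b (y + 1) then 1 else 0).
    rewrite (sumZ_ext _ _ _ (fun z =>
        (if Z.eqb z (y - 1) then / (2 * sigma y) * f z else 0) +
        (if Z.eqb z (y + 1) then / (2 * sigma y) * f z else 0) +
        (if Z.eqb z y then - (L + Rr) / (2 * sigma y) * f z else 0))).
    2: auto.
    2:{ intros z Hz. unfold gen. rewrite Ea.
        assert (Hz' : inI a b z = true) by (apply inI_true; auto). rewrite Hz'. simpl.
        unfold L, Rr.
        destruct (Z.eqb_spec z (y - 1)); destruct (Z.eqb_spec z (y + 1)); destruct (Z.eqb_spec z y);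
        destruct (Z.eqb_spec (Z.abs (y - z)) 1); destruct (Z.eqb_spec y z); try lia; try ring.
        }
    rewrite !sumZ_plus, !sumZ_delta by auto.
    assert (Hy' : inI a b y = true) by (apply inI_true; auto). rewrite Hy'.
    unfold L, Rr. destruct (inI a b (y - 1)); destruct (inI a b (y + 1)); unfold Rdiv; ring.
Qed.
Notation Cb := Binomial.C.

Lemma C_n_0' n : Cb n 0 = 1.
Proof. unfold Cb, Binomial.C; rewrite Nat.sub_0_r; simpl fact; simpl INR; field; apply INR_fact_neq_0. Qed.
Lemma C_n_n' n : Cb n n = 1.
Proof. unfold Cb, Binomial.C; rewrite Nat.sub_diag; simpl fact; simpl INR; field; apply INR_fact_neq_0. Qed.

Lemma pascal_gen (u : nat -> R) (mu : R) n :
  sum_f_R0 (fun k => Cb n k * mu ^ (n - k) * u (S k)) n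
  + mu * sum_f_R0 (fun k => Cb n k * mu ^ (n - k) * u k) n
  = sum_f_R0 (fun k => Cb (S n) k * mu ^ (S n - k) * u k) (S n).
Proof.
  destruct n as [|n].
  - simpl. rewrite !C_n_0', C_n_n'. simpl. ring.
  - rewrite (decomp_sum _ (S (S n))) by lia. simpl Nat.pred.
    rewrite C_n_0', Nat.sub_0_r.
    rewrite <- sum_scal_l.
    rewrite (decomp_sum (fun k => mu * (Cb (S n) k * mu ^ (S n - k) * u k))) by lia.
    simpl Nat.pred. rewrite C_n_0', Nat.sub_0_r.
    rewrite (sum_eq (fun i => Cb (S (S n)) (S i) * mu ^ (S (S n) - S i) * u (S i))
              (fun i => Cb (S n) i * mu ^ (S n - i) * u (S i) +
                        (if Nat.ltb i (S n) then Cb (S n) (S i) * mu ^ (S n - i) * u (S i) else 0))).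
    2:{ intros i Hi. destruct (Nat.ltb_spec i (S n)).
        - rewrite <- pascal by auto. replace (S (S n) - S i)%nat with (S n - i)%nat by lia. ring.
        - assert (i = S n) by lia. subst i. destruct (Nat.ltb_spec (S n) (S n)); [lia|]. rewrite !C_n_n', Nat.sub_diag. simpl. rewrite Nat.sub_diag. ring. }
    rewrite plus_sum.
    assert (E : sum_f_R0 (fun i => if Nat.ltb i (S n) then Cb (S n) (S i) * mu ^ (S n - i) * u (S i) else 0) (S n)
              = sum_f_R0 (fun i => if Nat.ltb i (S n) then Cb (S n) (S i) * mu ^ (S n - i) * u (S i) else 0) n).
    { rewrite tech5. destruct (Nat.ltb_spec (S n) (S n)); [lia|]. ring. }
    rewrite E; clear E.
    rewrite (sum_eq (fun i => mu * (Cb (S n) (S i) * mu ^ (S n - S i) * u (S i)))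
              (fun i => if Nat.ltb i (S n) then Cb (S n) (S i) * mu ^ (S n - i) * u (S i) else 0)).
    2:{ intros i Hi. destruct (Nat.ltb_spec i (S n)); [|lia].
        replace (S n - i)%nat with (S (S n - S i)) by lia. rewrite <- tech_pow_Rmult. ring. }
    rewrite <- !tech_pow_Rmult. ring.
Qed.

Lemma genpow_op a b sigma absorb : (a <= b)%Z -> forall n f x, (a <= x <= b)%Z ->
  sumZ a b (fun y => genpow a b sigma absorb n x y * f y) = opow (Qop a b sigma absorb) n f x.
Proof.
  intros H n; induction n as [|n IH]; intros f x Hx; simpl.
  - rewrite (sumZ_ext _ _ _ (fun y => if Z.eqb y x then f y else 0)) by
      (auto; intros z Hz; destruct (Z.eqb_spec x z); destruct (Z.eqb_spec z x); try lia; subst; ring).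
    rewrite sumZ_delta by auto. assert (inI a b x = true) by (apply inI_true; auto).
    rewrite H0; reflexivity.
  - rewrite (sumZ_ext _ _ _ (fun y => sumZ a b (fun z => gen a b sigma absorb x z * (genpow a b sigma absorb n z y * f y)))).
    2: auto.
    2:{ intros y Hy. rewrite Rmult_comm, <- sumZ_scal by auto. apply sumZ_ext; auto; intros; ring. }
    rewrite sumZ_swap by auto. unfold Qop. apply sumZ_ext; auto; intros z Hz.
    rewrite sumZ_scal by auto. rewrite IH; auto.
Qed.

Lemma binom_op a b sigma absorb lam : (a <= b)%Z -> forall n f y, (a <= y <= b)%Z ->
  opow (Qop a b sigma absorb) n f y =
  sum_f_R0 (fun k => Cb n k * (- lam) ^ (n - k) * opow (Bop a b sigma absorb lam) k f y) n.
Proof.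
  intros H n; induction n as [|n IH]; intros f y Hy.
  - simpl. rewrite C_n_0'. ring.
  - change (opow (Qop a b sigma absorb) (S n) f y) with
      (Qop a b sigma absorb (opow (Qop a b sigma absorb) n f) y).
    rewrite <- (opow_comm a b) by (auto; apply Qop_ext; auto).
    rewrite (opow_ext a b _ (Qop_ext a b sigma absorb H) n _
               (fun z => 1 * Bop a b sigma absorb lam f z + (- lam) * f z)) by
      (auto; intros; unfold Bop; ring).
    rewrite (opow_lin a b) by (try apply Qop_ext; try apply Qop_lin; auto).
    rewrite !IH by auto.
    rewrite <- (pascal_gen (fun k => opow (Bop a b sigma absorb lam) k f y)).
    rewrite Rmult_1_l. f_equal. apply sum_eq; intros k Hk.
    rewrite (opow_comm a b) by (auto; apply Bop_ext; auto). reflexivity.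
Qed.

Lemma Bop_pos a b sigma absorb lam : (a <= b)%Z ->
  (forall y, (a <= y <= b)%Z -> 0 < sigma y /\ / sigma y <= lam) ->
  posop a b (Bop a b sigma absorb lam).
Proof.
  intros H Hs h Hh y Hy. unfold Bop. rewrite Qop_eq by auto.
  destruct (Hs y Hy) as [Hs1 Hs2].
  assert (Hh0 := Hh y Hy).
  assert (0 <= lam) by (assert (0 < / sigma y) by (apply Rinv_0_lt_compat; auto); lra).
  destruct (absorb y). { assert (0 <= lam * h y) by (apply Rmult_le_pos; auto). lra. }
  set (s := / (2 * sigma y)).
  assert (Hs3 : 0 < s) by (unfold s; apply Rinv_0_lt_compat; lra).
  assert (Hs4 : 2 * s <= lam) by (unfold s; rewrite Rinv_mult; lra).
  unfold Rdiv; fold s.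
  assert (0 <= (lam - 2 * s) * h y) by (apply Rmult_le_pos; lra).
  assert (0 <= (lam - s) * h y) by (apply Rmult_le_pos; lra).
  destruct (inI a b (y - 1)) eqn:E1; destruct (inI a b (y + 1)) eqn:E2.
  - apply inI_true in E1, E2. assert (0 <= h (y - 1)%Z * s) by (apply Rmult_le_pos; [apply Hh; auto|lra]).
    assert (0 <= h (y + 1)%Z * s) by (apply Rmult_le_pos; [apply Hh; auto|lra]). nra.
  - apply inI_true in E1. assert (0 <= h (y - 1)%Z * s) by (apply Rmult_le_pos; [apply Hh; auto|lra]). nra.
  - apply inI_true in E2. assert (0 <= h (y + 1)%Z * s) by (apply Rmult_le_pos; [apply Hh; auto|lra]). nra.
  - assert (0 <= lam * h y) by (apply Rmult_le_pos; auto). nra.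
Qed.

Lemma Bop_const a b sigma absorb lam c : (a <= b)%Z -> forall y, (a <= y <= b)%Z ->
  Bop a b sigma absorb lam (fun _ => c) y = lam * c.
Proof.
  intros H y Hy. unfold Bop. rewrite Qop_eq by auto.
  destruct (absorb y); [ring|].
  destruct (inI a b (y - 1)); destruct (inI a b (y + 1)); unfold Rdiv; ring.
Qed.

Lemma opow_const a b sigma absorb lam c : (a <= b)%Z -> forall n y, (a <= y <= b)%Z ->
  opow (Bop a b sigma absorb lam) n (fun _ => c) y = lam ^ n * c.
Proof.
  intros H n; induction n as [|n IH]; intros y Hy; simpl; [ring|].
  rewrite (Bop_ext a b sigma absorb lam H _ (fun _ => lam ^ n * c)) by auto.
  rewrite Bop_const by auto. ring.
Qed.

Lemma exp_series x : is_series (fun k => x ^ k / INR (fact k)) (exp x).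
Proof.
  apply is_series_Reals. unfold exp; destruct (exist_exp x) as [l Hl]; simpl.
  unfold exp_in in Hl. intros eps He; destruct (Hl eps He) as [N HN]; exists N; intros n Hn.
  rewrite (sum_eq _ (fun i => / INR (fact i) * x ^ i)); [apply HN; auto| intros; unfold Rdiv; ring].
Qed.

Lemma is_series_scalR (a : nat -> R) l c : is_series a l -> is_series (fun k => c * a k) (c * l).
Proof. intros H. exact (is_series_scal_l c a l H). Qed.

Lemma is_series_leR (a b : nat -> R) la lb : is_series a la -> is_series b lb ->
  (forall n, a n <= b n) -> la <= lb.
Proof.
  intros Ha Hb H. apply is_series_Reals in Ha, Hb.
  eapply Rle_cv_lim; [| exact Ha | exact Hb].
  intros n; apply sum_Rle; auto.
Qed.

Lemma normR (x : R) : norm x = Rabs x.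
Proof. reflexivity. Qed.

Lemma is_series_extR (a b : nat -> R) (l : R) : (forall n, a n = b n) -> is_series a l -> is_series b l.
Proof. apply is_series_ext. Qed.

Lemma decr1R (a : nat -> R) (l : R) : a 0%nat = 0 -> is_series (fun k => a (S k)) l -> is_series a l.
Proof.
  intros H0 H. apply is_series_decr_1.
  match goal with |- is_series _ ?v => replace v with l end. exact H.
  rewrite H0; unfold plus, opp; simpl. change (l = l + - 0). ring.
Qed.

Lemma series_k t lam G : is_series (fun k => t ^ k / INR (fact k) * (INR k * lam ^ (pred k) * G))
  (t * G * exp (lam * t)).
Proof.
  apply decr1R. { simpl. unfold Rdiv. ring. }
  apply (is_series_extR (fun k => t * G * ((lam * t) ^ k / INR (fact k)))).
  2: apply is_series_scalR, exp_series.
  intros k. rewrite fact_simpl, mult_INR. simpl pred. rewrite Rpow_mult_distr.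
  simpl pow. field. split; [apply INR_fact_neq_0| apply not_0_INR; lia].
Qed.

Lemma Bop_bound a b sigma absorb lam phi G : (a <= b)%Z ->
  (forall y, (a <= y <= b)%Z -> 0 < sigma y /\ / sigma y <= lam) ->
  (forall y, (a <= y <= b)%Z -> Qop a b sigma absorb phi y <= G) ->
  forall k y, (a <= y <= b)%Z ->
  opow (Bop a b sigma absorb lam) k phi y <= lam ^ k * phi y + INR k * lam ^ (pred k) * G.
Proof.
  intros H Hs Hg k; induction k as [|k IH]; intros y Hy.
  - simpl. lra.
  - assert (Hl : 0 <= lam).
    { destruct (Hs y Hy) as [h1 h2]. assert (0 < / sigma y) by (apply Rinv_0_lt_compat; auto). lra. }
    simpl opow.
    eapply Rle_trans.
    { apply (op_mono a b _ (Bop_ext a b sigma absorb lam H) (Bop_lin a b sigma absorb lam H)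
              (Bop_pos a b sigma absorb lam H Hs) _
              (fun z => lam ^ k * phi z + (INR k * lam ^ pred k * G) * (fun _ : Z => 1) z)); [|exact Hy].
      intros z Hz. eapply Rle_trans; [apply IH; auto| right; ring]. }
    rewrite (Bop_lin a b sigma absorb lam H phi (fun _ => 1)) by auto.
    rewrite Bop_const by auto.
    unfold Bop at 1. assert (Hq := Hg y Hy).
    assert (lam ^ k * Qop a b sigma absorb phi y <= lam ^ k * G) by (apply Rmult_le_compat_l; auto; apply pow_le; auto).
    destruct k as [|k].
    + simpl. simpl in H0. lra.
    + rewrite S_INR. simpl pred. simpl pow. simpl pow in H0. rewrite !S_INR. ring_simplify. ring_simplify in H0. lra.
Qed.

Lemma main_bound a b sigma absorb x t phi c G :
  (a <= b)%Z ->
  (forall y, (a <= y <= b)%Z -> 0 < sigma y) ->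
  (a <= x <= b)%Z -> 0 < t -> 0 < c ->
  (forall y, (a <= y <= b)%Z -> 0 <= phi y) ->
  (forall y, (a <= y <= b)%Z -> absorb y = true -> c <= phi y) ->
  (forall y, (a <= y <= b)%Z -> Qop a b sigma absorb phi y <= G) ->
  phi x = 0 ->
  exists l, hit_prob a b sigma absorb t x l /\ c * l <= t * G.
Proof.
  intros H Hsig Hx Ht Hc Hp0 HpA Hg Hx0.
  set (lam := sumZ a b (fun y => / sigma y)).
  assert (Hlam : forall y, (a <= y <= b)%Z -> 0 < sigma y /\ / sigma y <= lam).
  { intros y Hy. split; auto. unfold lam.
    assert (E := sumZ_delta a b y (fun z => / sigma z) H).
    assert (E2 : inI a b y = true) by (apply inI_true; auto). rewrite E2 in E.
    rewrite <- E. apply sumZ_le; auto. intros z Hz.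
    assert (0 < / sigma z) by (apply Rinv_0_lt_compat; auto).
    destruct (Z.eqb z y); lra. }
  assert (Hl0 : 0 < lam).
  { destruct (Hlam x Hx). assert (0 < / sigma x) by (apply Rinv_0_lt_compat; auto). lra. }
  set (B := Bop a b sigma absorb lam).
  assert (HBe : extop a b B) by (apply Bop_ext; auto).
  assert (HBl : linop a b B) by (apply Bop_lin; auto).
  assert (HBp : posop a b B) by (apply Bop_pos; auto).
  set (ind := fun y : Z => if absorb y then 1 else 0).
  set (u := fun k => opow B k ind x).
  assert (Hu : forall k, 0 <= u k <= lam ^ k).
  { intros k. unfold u. split.
    - rewrite <- (Rmult_0_r (lam ^ k)). rewrite <- (opow_const a b sigma absorb lam 0 H k x Hx).
      apply (opow_mono a b); auto. intros z Hz; unfold ind; destruct (absorb z); lra.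
    - rewrite <- (Rmult_1_r (lam ^ k)). rewrite <- (opow_const a b sigma absorb lam 1 H k x Hx).
      apply (opow_mono a b); auto. intros z Hz; unfold ind; destruct (absorb z); lra. }
  set (sa := fun k => t ^ k / INR (fact k) * u k).
  set (sb := fun k => (- lam * t) ^ k / INR (fact k)).
  assert (Hfac : forall k, 0 < INR (fact k)) by (intros; apply lt_0_INR, lt_O_fact).
  assert (Hsa : ex_series (fun k => Rabs (sa k))).
  { apply (@ex_series_le R_AbsRing R_CompleteNormedModule (fun k => Rabs (sa k)) (fun k => (lam * t) ^ k / INR (fact k))).
    - intros k. rewrite normR, Rabs_Rabsolu. unfold sa.
      rewrite Rabs_pos_eq.
      2:{ apply Rmult_le_pos; [|apply Hu]. unfold Rdiv; apply Rmult_le_pos; [apply pow_le; lra|].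
          left; apply Rinv_0_lt_compat; auto. }
      rewrite Rpow_mult_distr. unfold Rdiv.
      assert (0 <= t ^ k * / INR (fact k)) by (apply Rmult_le_pos; [apply pow_le; lra| left; apply Rinv_0_lt_compat; auto]).
      assert (t ^ k * / INR (fact k) * u k <= t ^ k * / INR (fact k) * lam ^ k) by (apply Rmult_le_compat_l; auto; apply Hu).
      lra.
    - eexists; apply exp_series. }
  assert (Hsb : ex_series (fun k => Rabs (sb k))).
  { eexists. apply (is_series_extR (fun k => (lam * t) ^ k / INR (fact k))); [|apply exp_series].
    intros k. unfold sb. unfold Rdiv. rewrite Rabs_mult, <- RPow_abs, Rabs_inv.
    rewrite (Rabs_pos_eq (INR (fact k))) by (left; auto).
    rewrite Rabs_mult, Rabs_Ropp, (Rabs_pos_eq lam), (Rabs_pos_eq t) by lra. reflexivity. }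
  destruct (ex_series_Rabs _ Hsa) as [V HV].
  assert (HB : is_series sb (exp (- lam * t))) by apply exp_series.
  assert (Hm := is_series_mult sa sb V (exp (- lam * t)) HV HB Hsa Hsb).
  exists (V * exp (- lam * t)). split.
  - unfold hit_prob. apply is_series_Reals.
    apply (is_series_extR _ _ _ (fun n => eq_refl) ) in Hm.
    eapply is_series_extR; [|exact Hm].
    intros n. simpl.
    rewrite (sumZ_ext a b _ (fun y => genpow a b sigma absorb n x y * ind y)) by
      (auto; intros; unfold ind; destruct (absorb z); ring).
    rewrite genpow_op by auto.
    rewrite (binom_op a b sigma absorb lam H n ind x Hx).
    rewrite <- sum_scal_l. apply sum_eq; intros k Hk.
    unfold sa, sb, u. fold B.
    replace n with (k + (n - k))%nat at 1 3 by lia.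
    rewrite Rpow_mult_distr, pow_add.
    unfold Cb, Binomial.C. replace (k + (n - k))%nat with n by lia.
    field. repeat split; apply INR_fact_neq_0.
  - assert (Hcu : forall k, c * u k <= INR k * lam ^ (pred k) * G).
    { intros k. unfold u.
      assert (E := opow_lin a b B HBe HBl k ind ind c 0 x Hx). rewrite Rmult_0_l, Rplus_0_r in E.
      rewrite <- E.
      eapply Rle_trans.
      { apply (opow_mono a b B HBe HBl HBp k _ phi); auto.
        intros z Hz. unfold ind. destruct (absorb z) eqn:Ez.
        - rewrite Rmult_1_r, Rmult_0_l, Rplus_0_r. apply HpA; auto.
        - rewrite Rmult_0_r, Rmult_0_l, Rplus_0_r. apply Hp0; auto. }
      eapply Rle_trans.
      { apply (Bop_bound a b sigma absorb lam phi G H Hlam Hg k x Hx). }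
      rewrite Hx0. lra. }
    assert (Hbound : c * V <= t * G * exp (lam * t)).
    { apply (is_series_leR (fun k => c * sa k) (fun k => t ^ k / INR (fact k) * (INR k * lam ^ (pred k) * G))).
      - apply is_series_scalR; exact HV.
      - apply series_k.
      - intros k. unfold sa.
        assert (0 <= t ^ k / INR (fact k)).
        { unfold Rdiv; apply Rmult_le_pos; [apply pow_le; lra| left; apply Rinv_0_lt_compat; auto]. }
        specialize (Hcu k).
        replace (c * (t ^ k / INR (fact k) * u k)) with (t ^ k / INR (fact k) * (c * u k)) by ring.
        apply Rmult_le_compat_l; auto. }
    replace (- lam * t) with (- (lam * t)) by ring. rewrite exp_Ropp.
    assert (0 < exp (lam * t)) by apply exp_pos.
    replace (c * (V * / exp (lam * t))) with ((c * V) * / exp (lam * t)) by ring.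
    apply (Rmult_le_reg_r (exp (lam * t))); auto.
    rewrite Rmult_assoc, Rinv_l by lra. lra.
Qed.

Lemma IZR_max0 m : IZR (Z.max m 0) = if Z.leb 0 m then IZR m else 0.
Proof. destruct (Z.leb_spec 0 m); [rewrite Z.max_l by lia|rewrite Z.max_r by lia]; reflexivity. Qed.

Theorem proposition2p2 (a b : Z) (sigma : Z -> R)
  (Hab : (a < b)%Z)
  (Hsig : forall x : Z, (a <= x <= b)%Z -> 0 < sigma x) :
  (forall (x z : Z) (t : R), (a <= x < b)%Z -> (x <= z < b)%Z -> 0 < t ->
     exists l, hit_prob a b sigma (at_b b) t x l /\
       l <= t / (2 * IZR (b - z) * sigma z))
  /\
  (forall (x : Z) (t : R), (a < x < b)%Z -> 0 < t ->
     exists l, hit_prob a b sigma (at_ab a b) t x l /\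
       l <= t / (IZR (Z.min (x - a) (b - x)) * sigma x)).
Proof.
  split.
  - intros x z t Hx Hz Ht.
    assert (Hsz : 0 < sigma z) by (apply Hsig; lia).
    assert (Hc : 0 < IZR (b - z)) by (apply IZR_lt; lia).
    destruct (main_bound a b sigma (at_b b) x t (fun w => IZR (Z.max (w - z) 0)) (IZR (b - z))
                (/ (2 * sigma z))) as [l [Hl Hb]]; auto; try lia.
    + intros y Hy. apply IZR_le. lia.
    + intros y Hy Ey. unfold at_b in Ey. apply Z.eqb_eq in Ey. subst y.
      rewrite Z.max_l by lia. lra.
    + intros y Hy. rewrite Qop_eq by lia. unfold at_b.
      assert (0 < / (2 * sigma z)) by (apply Rinv_0_lt_compat; lra).
      destruct (Z.eqb_spec y b); [lra|].
      assert (Hs : 0 < sigma y) by (apply Hsig; lia).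
      assert (E2 : inI a b (y + 1) = true) by (apply inI_true; lia). rewrite E2.
      rewrite !IZR_max0.
      destruct (Z.lt_trichotomy y z) as [Hyz|[Hyz|Hyz]].
      * assert (E1 : inI a b (y - 1) = true \/ inI a b (y - 1) = false) by (destruct (inI a b (y - 1)); auto).
        destruct (Z.leb_spec 0 (y - 1 - z)); try lia.
        destruct (Z.leb_spec 0 (y - z)); try lia.
        destruct (Z.leb_spec 0 (y + 1 - z)).
        -- assert (Hq : (y + 1 - z = 0)%Z) by lia. rewrite Hq.
           destruct E1 as [E1|E1]; rewrite E1; unfold Rdiv; rewrite Rmult_plus_distr_r; lra.
        -- destruct E1 as [E1|E1]; rewrite E1; unfold Rdiv; lra.
      * subst y. assert (E1 : inI a b (z - 1) = true \/ inI a b (z - 1) = false) by (destruct (inI a b (z - 1)); auto).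
        destruct (Z.leb_spec 0 (z - 1 - z)); try lia.
        destruct (Z.leb_spec 0 (z - z)); try lia.
        destruct (Z.leb_spec 0 (z + 1 - z)); try lia.
        replace (z - z)%Z with 0%Z by lia. replace (z + 1 - z)%Z with 1%Z by lia.
        destruct E1 as [E1|E1]; rewrite E1; unfold Rdiv; right; ring.
      * assert (E1 : inI a b (y - 1) = true) by (apply inI_true; lia). rewrite E1.
        destruct (Z.leb_spec 0 (y - 1 - z)); try lia.
        destruct (Z.leb_spec 0 (y - z)); try lia.
        destruct (Z.leb_spec 0 (y + 1 - z)); try lia.
        rewrite !minus_IZR, !plus_IZR. unfold Rdiv.
        replace (IZR y - 1 - IZR z - (IZR y - IZR z) + (IZR y + 1 - IZR z - (IZR y - IZR z))) with 0 by ring.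
        lra.
    + simpl. rewrite Z.max_r by lia. reflexivity.
    + exists l; split; auto.
      apply (Rmult_le_reg_l (IZR (b - z))); auto.
      eapply Rle_trans; [exact Hb|]. right. field. lra.
  - intros x t Hx Ht.
    assert (Hsx : 0 < sigma x) by (apply Hsig; lia).
    assert (Hc : 0 < IZR (Z.min (x - a) (b - x))) by (apply IZR_lt; lia).
    destruct (main_bound a b sigma (at_ab a b) x t (fun w => IZR (Z.abs (w - x))) (IZR (Z.min (x - a) (b - x)))
                (/ sigma x)) as [l [Hl Hb]]; auto; try lia.
    + intros y Hy. apply IZR_le. lia.
    + intros y Hy Ey. unfold at_ab in Ey. apply IZR_le.
      destruct (Z.eqb_spec y a); destruct (Z.eqb_spec y b); simpl in Ey; try discriminate; lia.
    + intros y Hy. rewrite Qop_eq by lia. unfold at_ab.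
      assert (0 < / sigma x) by (apply Rinv_0_lt_compat; lra).
      destruct (Z.eqb_spec y a); [simpl; lra|]. destruct (Z.eqb_spec y b); [simpl; lra|]. simpl.
      assert (E1 : inI a b (y - 1) = true) by (apply inI_true; lia). rewrite E1.
      assert (E2 : inI a b (y + 1) = true) by (apply inI_true; lia). rewrite E2.
      destruct (Z.lt_trichotomy y x) as [Hyx|[Hyx|Hyx]].
      * rewrite (Z.abs_neq (y - 1 - x)), (Z.abs_neq (y - x)), (Z.abs_neq (y + 1 - x)) by lia.
        rewrite !opp_IZR, !minus_IZR, !plus_IZR. unfold Rdiv.
        match goal with |- ?A * _ <= _ => replace A with 0 by ring end. lra.
      * subst y. replace (x - 1 - x)%Z with (-1)%Z by lia. replace (x - x)%Z with 0%Z by lia.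
        replace (x + 1 - x)%Z with 1%Z by lia. simpl. right. field. lra.
      * rewrite (Z.abs_eq (y - 1 - x)), (Z.abs_eq (y - x)), (Z.abs_eq (y + 1 - x)) by lia.
        rewrite !minus_IZR, !plus_IZR. unfold Rdiv.
        match goal with |- ?A * _ <= _ => replace A with 0 by ring end. lra.
    + simpl. rewrite Z.sub_diag. reflexivity.
    + exists l; split; auto.
      apply (Rmult_le_reg_l (IZR (Z.min (x - a) (b - x)))); auto.
      eapply Rle_trans; [exact Hb|]. right. field. lra.
Qed.
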